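(* Let $n \geq 1$. There exist $6n+3$ products $P_1,\dots,P_{6n+3}$, each of the form $P_t = L_t M_t$ where $L_t$ and $M_t$ are $\mathbb{Z}$-linear combinations of the $3n+9$ indeterminates $a_{ij}$ ($1\le i\le n$, $1\le j\le 3$) and $b_{jk}$ ($1\le j,k\le 3$), such that for every $1\le i\le n$ and $1\le k\le 3$ the polynomial $\sum_{j=1}^3 a_{ij}b_{jk}$ is a $\mathbb{Z}$-linear combination of $P_1,\dots,P_{6n+3}$ in the commutative polynomial ring $\mathbb{Z}[a_{ij}, b_{jk}]$. Consequently, for every commutative ring $R$, every $n\times 3$ matrix $A=(a_{ij})$ over $R$ and every $3\times 3$ matrix $B=(b_{jk})$ over $R$, the product $AB$ can be computed using $6n+3$ multiplications.
   Context: ''The product can be computed using $k$ multiplications'' means: there are $k$ products, each a product of two linear forms with integer coefficients in the entries of $A$ and $B$ (the two factors may each involve entries of both $A$ and $B$; commutativity of $R$ may be used), such that every entry of $AB$ is an integer linear combination of these $k$ products, identically for all inputs. Additions, subtractions and multiplications by integer constants are not counted. *)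

(* Defs.v *)
From HB Require Import structures.
From mathcomp Require Import all_boot all_order all_algebra.
Set Implicit Arguments. Unset Strict Implicit. Unset Printing Implicit Defensive.
Import GRing.Theory.
Local Open Scope ring_scope.

Definition linform (R : comPzRingType) (n : nat)
  (A : 'M[R]_(n, 3)) (B : 'M[R]_3)
  (ca : 'I_n -> 'I_3 -> int) (cb : 'I_3 -> 'I_3 -> int) : R :=
  \sum_(i < n) \sum_(j < 3) A i j *~ ca i j
  + \sum_(j < 3) \sum_(k < 3) B j k *~ cb j k.

(* Main.v *)
Require Import Defs.
From HB Require Import structures.
From mathcomp Require Import all_boot all_order all_algebra.
From mathcomp Require Import ring zify.
Import GRing.Theory.
Local Open Scope ring_scope.
Set Implicit Arguments.

(* Per row i: six products
   P0 = (a1 + b23)(a2 + b11)   P1 = (a2 + b31)(a3 + b22)   P2 = (a3 + b12)(a1 + b33)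
   P3 = (a1 + a3 + b23 + b22 - b21) a2
   P4 = (a1 + a2 + b31 + b33 - b32) a3
   P5 = (a2 + a3 + b12 + b11 - b13) a1
   global: G6 = b23 b11, G7 = b31 b22, G8 = b12 b33. *)

Definition LA (s j : nat) : int :=
  match s, j with
  | 0, 0 => 1 | 1, 1 => 1 | 2, 2 => 1
  | 3, 0 => 1 | 3, 2 => 1 | 4, 0 => 1 | 4, 1 => 1 | 5, 1 => 1 | 5, 2 => 1
  | _, _ => 0 end.
Definition MA (s j : nat) : int :=
  match s, j with
  | 0, 1 => 1 | 1, 2 => 1 | 2, 0 => 1 | 3, 1 => 1 | 4, 2 => 1 | 5, 0 => 1
  | _, _ => 0 end.
Definition LB (s j k : nat) : int :=
  match s, j, k with
  | 0, 1, 2 => 1 | 1, 2, 0 => 1 | 2, 0, 1 => 1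
  | 3, 1, 2 => 1 | 3, 1, 1 => 1 | 3, 1, 0 => -1
  | 4, 2, 0 => 1 | 4, 2, 2 => 1 | 4, 2, 1 => -1
  | 5, 0, 1 => 1 | 5, 0, 0 => 1 | 5, 0, 2 => -1
  | 6, 1, 2 => 1 | 7, 2, 0 => 1 | 8, 0, 1 => 1
  | _, _, _ => 0 end.
Definition MB (s j k : nat) : int :=
  match s, j, k with
  | 0, 0, 0 => 1 | 1, 1, 1 => 1 | 2, 2, 2 => 1
  | 6, 0, 0 => 1 | 7, 1, 1 => 1 | 8, 2, 2 => 1
  | _, _, _ => 0 end.
Definition W (k s : nat) : int :=
  match k, s with
  | 0, 0 => 1 | 0, 1 => 1 | 0, 3 => -1 | 0, 6 => -1 | 0, 7 => -1
  | 1, 1 => 1 | 1, 2 => 1 | 1, 4 => -1 | 1, 7 => -1 | 1, 8 => -1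
  | 2, 2 => 1 | 2, 0 => 1 | 2, 5 => -1 | 2, 8 => -1 | 2, 6 => -1
  | _, _ => 0 end.

Definition decr (n t : nat) : nat := if (t < 6 * n)%N then (t %/ 6)%N else 0%N.
Definition dect (n t : nat) : nat := if (t < 6 * n)%N then (t %% 6)%N else (6 + (t - 6 * n))%N.
Definition idxv (n i s : nat) : nat := if (s < 6)%N then (6 * i + s)%N else (6 * n + (s - 6))%N.

Lemma idxv_lt n (i : 'I_n) (s : 'I_9) : (idxv n i s < 6 * n + 3)%N.
Proof. have := ltn_ord i; have := ltn_ord s; rewrite /idxv; case: ifP => _; lia. Qed.

Definition idx n (i : 'I_n) (s : 'I_9) : 'I_(6 * n + 3) := Ordinal (idxv_lt i s).

Lemma dect_idx n (i : 'I_n) (s : 'I_9) : dect n (idx i s) = s.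
Proof.
have := ltn_ord i; have := ltn_ord s; rewrite /dect /idx /idxv /=.
case: (ltnP s 6) => hs h9 hi.
  have -> : (6 * i + s < 6 * n)%N by lia.
  lia.
have -> : (6 * n + (s - 6) < 6 * n)%N = false by lia.
lia.
Qed.

Lemma decr_idx n (i : 'I_n) (s : 'I_9) : (s < 6)%N -> decr n (idx i s) = i.
Proof.
move=> hs; have := ltn_ord i; rewrite /decr /idx /idxv /= hs => hi.
have -> : (6 * i + s < 6 * n)%N by lia.
lia.
Qed.

Lemma LA_ge6 s j : (6 <= s)%N -> LA s j = 0.
Proof. by do 6! (case: s => [|s] //); case: j. Qed.
Lemma MA_ge6 s j : (6 <= s)%N -> MA s j = 0.
Proof. by do 6! (case: s => [|s] //); case: j. Qed.

Lemma pick_sum (V : zmodType) N m (X : 'I_N -> V) (ix : 'I_m -> 'I_N) (w : 'I_m -> int) :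
  \sum_(t < N) X t *~ (\sum_(s < m) (t == ix s)%:Z * w s) = \sum_(s < m) X (ix s) *~ w s.
Proof.
under eq_bigr => t _ do rewrite mulrz_sumr.
rewrite exchange_big /=; apply: eq_bigr => s _.
rewrite (bigD1 (ix s)) //= eqxx mul1r big1 ?addr0 // => t /negbTE ->.
by rewrite mul0r mulr0z.
Qed.

Lemma sumA_pick (R : comPzRingType) n (A : 'M[R]_(n, 3)) (i : 'I_n) (r : nat) (f : nat -> int) :
  (r = i \/ forall j, f j = 0) ->
  \sum_(i0 < n) \sum_(j < 3) A i0 j *~ (if r == i0 then f j else 0)
  = \sum_(j < 3) A i j *~ f j.
Proof.
case=> [->|hf].
  rewrite (bigD1 i) //= [X in _ + X]big1 ?addr0.
    by apply: eq_bigr => j _; rewrite eqxx.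
  move=> i0 hi0; apply: big1 => j _.
  by rewrite (_ : (nat_of_ord i == nat_of_ord i0) = false) ?mulr0z //; apply/negbTE; rewrite eq_sym.
rewrite big1; last by move=> i0 _; apply: big1 => j _; case: ifP; rewrite ?hf mulr0z.
by rewrite big1 // => j _; rewrite hf mulr0z.
Qed.

Definition la n (t : 'I_(6 * n + 3)) (i0 : 'I_n) (j : 'I_3) : int :=
  if decr n t == i0 then LA (dect n t) j else 0.
Definition ma n (t : 'I_(6 * n + 3)) (i0 : 'I_n) (j : 'I_3) : int :=
  if decr n t == i0 then MA (dect n t) j else 0.
Definition lb n (t : 'I_(6 * n + 3)) (j k : 'I_3) : int := LB (dect n t) j k.
Definition mb n (t : 'I_(6 * n + 3)) (j k : 'I_3) : int := MB (dect n t) j k.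
Definition cc n (i : 'I_n) (k : 'I_3) (t : 'I_(6 * n + 3)) : int :=
  \sum_(s < 9) (t == idx i s)%:Z * W k s.

Lemma lf_idx (R : comPzRingType) n (A : 'M[R]_(n, 3)) (B : 'M[R]_3) (i : 'I_n) (s : 'I_9) :
  linform A B (@la n (idx i s)) (@lb n (idx i s)) =
  \sum_(j < 3) A i j *~ LA s j + \sum_(j < 3) \sum_(k < 3) B j k *~ LB s j k.
Proof.
rewrite /linform /la /lb dect_idx; congr (_ + _).

rewrite (@sumA_pick _ _ A i (decr n (idx i s)) (fun j => LA s j)) //.
case: (ltnP s 6) => hs; first by left; rewrite decr_idx.
by right => j; rewrite LA_ge6.
Qed.

Lemma mf_idx (R : comPzRingType) n (A : 'M[R]_(n, 3)) (B : 'M[R]_3) (i : 'I_n) (s : 'I_9) :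
  linform A B (@ma n (idx i s)) (@mb n (idx i s)) =
  \sum_(j < 3) A i j *~ MA s j + \sum_(j < 3) \sum_(k < 3) B j k *~ MB s j k.
Proof.
rewrite /linform /ma /mb dect_idx; congr (_ + _).
rewrite (@sumA_pick _ _ A i (decr n (idx i s)) (fun j => MA s j)) //.
case: (ltnP s 6) => hs; first by left; rewrite decr_idx.
by right => j; rewrite MA_ge6.
Qed.

Unset Implicit Arguments.

Theorem mainTheorem1 (n : nat) (hn : (1 <= n)%N) :
  exists (la : 'I_(6 * n + 3) -> 'I_n -> 'I_3 -> int)
         (lb : 'I_(6 * n + 3) -> 'I_3 -> 'I_3 -> int)
         (ma : 'I_(6 * n + 3) -> 'I_n -> 'I_3 -> int)
         (mb : 'I_(6 * n + 3) -> 'I_3 -> 'I_3 -> int)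
         (c : 'I_n -> 'I_3 -> 'I_(6 * n + 3) -> int),
    forall (R : comPzRingType) (A : 'M[R]_(n, 3)) (B : 'M[R]_3)
           (i : 'I_n) (k : 'I_3),
      (A *m B) i k =
      \sum_(t < 6 * n + 3)
        (linform A B (la t) (lb t) * linform A B (ma t) (mb t)) *~ c i k t.
Proof.
exists (@la n), (@lb n), (@ma n), (@mb n), (@cc n) => R A B i k.
rewrite /cc pick_sum.
under eq_bigr => s _ do rewrite lf_idx mf_idx.
rewrite mxE.
have e0 : forall m, nat_of_ord (ord0 : 'I_m.+1) = 0%N by [].
have : k = ord0 \/ k = lift ord0 ord0 \/ k = lift ord0 (lift ord0 ord0).
  by case: k => [[|[|[|kk]]] hk]; [left|right;left|right;right|by []]; apply: val_inj.
rewrite !big_ord_recl !big_ord0.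
case=> [->|[->|->]]; rewrite ?lift0 ?e0; cbn [LA MA LB MB W]; ring.
Qed.
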